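(* Let $\Lambda$ be a row-finite $k$-graph with no sources, and let $\{t_\lambda\}_{\lambda\in\Lambda}$ be a purely atomic representation of $C^*(\Lambda)$ on a Hilbert space $\mathcal H$, with associated projection valued measure $P$ on the Borel subsets of $\Lambda^\infty$. Then: (a) For every $\lambda\in\Lambda$ and every $\omega\in\Lambda^\infty$ with $r(\omega)=s(\lambda)$ we have $t_\lambda P(\{\omega\})t_\lambda^*=P(\{\lambda\omega\})$; and for every $\omega\in\Lambda^\infty$ and $n\in\mathbb N^k$ we have $t_{\omega(0,n)}^*P(\{\omega\})t_{\omega(0,n)}=P(\{\sigma^n(\omega)\})$. (b) For $n\in\mathbb N^k$, $\eta\in\Lambda^n$ and $\omega\in\Lambda^\infty$ with $\eta\neq\omega(0,n)$, we have $t_\eta^*P(\{\omega\})t_\eta=0$.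
   Context: A $k$-graph ($k\ge 1$) is a countable small category $\Lambda$ with a functor $d:\Lambda\to\mathbb N^k$ (the degree) satisfying the factorization property: whenever $d(\lambda)=m+n$ there are unique $\mu,\nu\in\Lambda$ with $\lambda=\mu\nu$, $d(\mu)=m$, $d(\nu)=n$. Morphisms are called paths, objects (identified with identity morphisms) form the vertex set $\Lambda^0$; $r,s$ denote range and source; $\Lambda^n=\{\lambda:d(\lambda)=n\}$ and $v\Lambda^n=\{\lambda\in\Lambda^n:r(\lambda)=v\}$. $\Lambda$ is row-finite if each $v\Lambda^n$ is finite, and has no sources if each $v\Lambda^n$ is nonempty. Let $\Omega_k$ be the $k$-graph with objects $\mathbb N^k$, morphisms $\{(p,q)\in\mathbb N^k\times\mathbb N^k:p\le q\}$, $r(p,q)=p$, $s(p,q)=q$, $d(p,q)=q-p$. An infinite path is a degree-preserving functor $x:\Omega_k\to\Lambda$; $\Lambda^\infty$ is the set of infinite paths, $r(x)=x(0,0)$, and $x(0,n)\in\Lambda^n$. The shift is $\sigma^m(x)(p,q)=x(p+m,q+m)$. For $\lambda\in\Lambda$ and $x\in\Lambda^\infty$ with $r(x)=s(\lambda)$, $\lambda x$ denotes the unique $y\in\Lambda^\infty$ with $y(0,d(\lambda))=\lambda$ and $\sigma^{d(\lambda)}(y)=x$. Cylinder sets are $Z(\lambda)=\{x\in\Lambda^\infty:x(0,d(\lambda))=\lambda\}$; they generate the Borel $\sigma$-algebra of $\Lambda^\infty$. A representation of $C^*(\Lambda)$ is a family $\{t_\lambda\}_{\lambda\in\Lambda}$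 of partial isometries on a Hilbert space with: (CK1) $\{t_v\}_{v\in\Lambda^0}$ mutually orthogonal projections; (CK2) $t_\lambda t_\eta=t_{\lambda\eta}$ when $s(\lambda)=r(\eta)$; (CK3) $t_\lambda^*t_\lambda=t_{s(\lambda)}$; (CK4) $t_v=\sum_{\lambda\in v\Lambda^n}t_\lambda t_\lambda^*$ for all $v,n$. The associated projection valued measure $P$ is the projection valued measure on the Borel sets of $\Lambda^\infty$ with $P(Z(\lambda))=t_\lambda t_\lambda^*$ for all $\lambda$. The representation is purely atomic if there is a Borel set $\Omega\subseteq\Lambda^\infty$ with $P(\Lambda^\infty\setminus\Omega)=0$, $P(\{\omega\})\ne0$ for all $\omega\in\Omega$, and $\sum_{\omega\in\Omega}P(\{\omega\})=\mathrm{Id}$ (strong operator topology). *)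

(* Defs.v *)
From mathcomp Require Import all_boot all_algebra.
From mathcomp Require Import all_classical all_reals all_analysis.
From mathcomp Require Import complex.
From Stdlib Require Import ClassicalEpsilon.
Set Implicit Arguments.
Unset Strict Implicit.
Unset Printing Implicit Defensive.
Import GRing.Theory Num.Theory numFieldNormedType.Exports.
Local Open Scope classical_set_scope.
Local Open Scope ring_scope.

Definition Nk (k : nat) := {ffun 'I_k -> nat}.
Definition nk0 {k} : Nk k := [ffun => 0%N].
Definition nkadd {k} (m n : Nk k) : Nk k := [ffun i => (m i + n i)%N].
Definition nksub {k} (m n : Nk k) : Nk k := [ffun i => (m i - n i)%N].
Definition nkle {k} (m n : Nk k) : bool := [forall i, m i <= n i]%N.

(* k-graphs: countable small categories with a degree functor d to N^k *)
(* satisfying the unique factorization property.  Objects (vertices)   *)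
(* are identified with identity morphisms via [kid].  The composition  *)
(* [kcomp] is total as a function but only meaningful on composable    *)
(* pairs; all axioms about it are stated only for composable pairs.    *)
Record kgraph (k : nat) := KGraph {
  kObj : countType;
  kMor : countType;
  kr : kMor -> kObj;
  ks : kMor -> kObj;
  kid : kObj -> kMor;
  kcomp : kMor -> kMor -> kMor;
  kd : kMor -> Nk k;
  kr_id : forall v, kr (kid v) = v;
  ks_id : forall v, ks (kid v) = v;
  kcomp_idl : forall l, kcomp (kid (kr l)) l = l;
  kcomp_idr : forall l, kcomp l (kid (ks l)) = l;
  kr_comp : forall l m, ks l = kr m -> kr (kcomp l m) = kr l;
  ks_comp : forall l m, ks l = kr m -> ks (kcomp l m) = ks m;
  kcompA : forall l m n, ks l = kr m -> ks m = kr n ->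
    kcomp l (kcomp m n) = kcomp (kcomp l m) n;
  kd_id : forall v, kd (kid v) = nk0;
  kd_comp : forall l m, ks l = kr m -> kd (kcomp l m) = nkadd (kd l) (kd m);
  kfactor : forall l (m n : Nk k), kd l = nkadd m n ->
    exists! mn : kMor * kMor,
      [/\ ks mn.1 = kr mn.2, l = kcomp mn.1 mn.2, kd mn.1 = m & kd mn.2 = n]
}.

Arguments kr {k L} : rename.
Arguments ks {k L} : rename.
Arguments kid {k L} : rename.
Arguments kcomp {k L} : rename.
Arguments kd {k L} : rename.

Section KGraph.
Variables (k : nat) (L : kgraph k).

Definition vLn (v : kObj L) (n : Nk k) : set (kMor L) :=
  [set l | kr l = v /\ kd l = n].

Definition row_finite := forall v n, finite_set (vLn v n).
Definition no_sources := forall v n, vLn v n !=set0.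

(* Infinite paths: degree-preserving functors Omega_k -> Lambda.
   A functor is given by its values x p q on the morphisms (p,q), p <= q,
   of Omega_k; to get a faithful type (equality = equality of functors)
   the values at pairs with ~~ (p <= q), which are not morphisms of
   Omega_k, are normalized to x p p. *)
Definition is_ipath (x : Nk k -> Nk k -> kMor L) :=
  [/\ (forall p q, ~~ nkle p q -> x p q = x p p),
      (forall p, x p p = kid (kr (x p p))),
      (forall p q, nkle p q ->
         x p p = kid (kr (x p q)) /\ x q q = kid (ks (x p q))),
      (forall p q, nkle p q -> kd (x p q) = nksub q p) &
      (forall p q m, nkle p q -> nkle q m ->
         ks (x p q) = kr (x q m) /\ x p m = kcomp (x p q) (x q m))].

Record ipath := IPath { ipf :> Nk k -> Nk k -> kMor L; ipP : is_ipath ipf }.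

Definition ipr (x : ipath) : kObj L := kr (x nk0 nk0).
Definition seg (x : ipath) (n : Nk k) : kMor L := x nk0 n.

Lemma nkle_add2r (p q m : Nk k) : nkle (nkadd p m) (nkadd q m) = nkle p q.
Proof.
apply/forallP/forallP => H i; have := H i; by rewrite !ffunE leq_add2r.
Qed.

Lemma nksub_add2r (p q m : Nk k) : nksub (nkadd q m) (nkadd p m) = nksub q p.
Proof. by apply/ffunP => i; rewrite !ffunE subnDr. Qed.

Lemma ipshift_is_ipath (m : Nk k) (x : ipath) :
  is_ipath (fun p q => x (nkadd p m) (nkadd q m)).
Proof.
case: (ipP x) => H1 H2 H3 H4 H5; split.
- by move=> p q Hpq; apply: H1; rewrite nkle_add2r.
- by move=> p; apply: H2.
- by move=> p q Hpq; apply: H3; rewrite nkle_add2r.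
- by move=> p q Hpq; rewrite H4 ?nkle_add2r // nksub_add2r.
- by move=> p q r Hpq Hqr; apply: H5; rewrite nkle_add2r.
Qed.

Definition ipshift (m : Nk k) (x : ipath) : ipath :=
  IPath (ipshift_is_ipath m x).

(* lambda x : the unique y with y(0,d(lambda)) = lambda and
   sigma^{d(lambda)} y = x (exists and is unique when r(x) = s(lambda)) *)
Definition ipcat (l : kMor L) (x : ipath) : ipath :=
  epsilon (inhabits x)
    (fun y => seg y (kd l) = l /\ ipshift (kd l) y = x).

Definition cyl (l : kMor L) : set ipath := [set x | seg x (kd l) = l].
Definition ipborel : set (set ipath) :=
  <<s [set cyl l | l in [set: kMor L]] >>.

End KGraph.

Section Hilbert.
Local Open Scope complex_scope.
Variables (R : realType) (H : lmodType R[i]) (ip : H -> H -> R[i]).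

Definition nsq (v : H) : R := complex.Re (ip v v).

Definition is_hilbert :=
  [/\ (forall a u v w, ip (a *: u + v) w = a * ip u w + ip v w),
      (forall u v, ip u v = (ip v u)^*),
      (forall v, 0 <= ip v v),
      (forall v, ip v v = 0 -> v = 0) &
      (forall u : nat -> H,
         (forall e : R, 0 < e -> exists N, forall m n, (N <= m)%N -> (N <= n)%N ->
            nsq (u m - u n) < e) ->
         exists v, (fun n => nsq (u n - v)) @ \oo --> (0 : R))].

Definition vcvg (u : nat -> H) (v : H) := (fun n => nsq (u n - v)) @ \oo --> (0 : R).

Definition adjoint_of (T S : H -> H) := forall u v, ip (T u) v = ip u (S v).

Definition bounded_op (T : H -> H) :=
  (forall (a : R[i]) u v, T (a *: u + v) = a *: T u + T v) /\
  exists M : R, forall v, nsq (T v) <= M * nsq v.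

Definition is_proj (T : H -> H) := bounded_op T /\ T \o T = T /\ adjoint_of T T.

End Hilbert.

Section Rep.
Variables (k : nat) (L : kgraph k) (R : realType) (H : lmodType R[i])
  (ip : H -> H -> R[i]).

Definition is_representation (t ts : kMor L -> H -> H) :=
  [/\ (forall l, bounded_op ip (t l) /\ adjoint_of ip (t l) (ts l)),
      (forall v, is_proj ip (t (kid v))) /\
        (forall v w, v <> w -> t (kid v) \o t (kid w) = (fun=> 0)),
      (forall l m, ks l = kr m -> t l \o t m = t (kcomp l m)),
      (forall l, ts l \o t l = t (kid (ks l))) &
      (forall v n (s : seq (kMor L)), uniq s ->
         (forall l, l \in s <-> vLn v n l) ->
         forall h, t (kid v) h = \sum_(l <- s) t l (ts l h))].

Definition is_pvm (P : set (ipath L) -> H -> H) :=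
  [/\ (forall A, ipborel A -> is_proj ip (P A)),
      P set0 = (fun=> 0),
      P setT = id,
      (forall A B, ipborel A -> ipborel B -> P (A `&` B) = P A \o P B) &
      (forall A : nat -> set (ipath L), (forall n, ipborel (A n)) ->
         trivIset setT A ->
         forall h, vcvg ip (fun n => \sum_(i < n) P (A i) h) (P (\bigcup_n A n) h))].

Definition pvm_of_rep (t ts : kMor L -> H -> H) (P : set (ipath L) -> H -> H) :=
  is_pvm P /\ forall l, P (cyl l) = t l \o ts l.

(* purely atomic: the sum over Omega converges in the strong operator
   topology to Id, i.e. for each h the net of finite partial sums
   (indexed by finite subsets of Omega, here given as injective maps
   'I_n -> Omega, ordered by inclusion of ranges) converges to h. *)
Definition purely_atomic (P : set (ipath L) -> H -> H) :=
  exists Om : set (ipath L),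
    [/\ ipborel Om,
        P (~` Om) = (fun=> 0),
        (forall w, Om w -> P [set w] <> (fun=> 0)) &
        (forall h (e : R), 0 < e ->
           exists n0 (f0 : 'I_n0 -> ipath L), (forall i, Om (f0 i)) /\
           forall n (f : 'I_n -> ipath L), injective f -> (forall i, Om (f i)) ->
             (forall i0, exists i, f i = f0 i0) ->
             nsq ip (\sum_(i < n) P [set f i] h - h) < e)].

End Rep.

(* Main.v *)
Require Import Defs.
From mathcomp Require Import all_boot all_algebra.
From mathcomp Require Import all_classical all_reals all_analysis.
From mathcomp Require Import complex.
Import GRing.Theory Num.Theory.
From Stdlib Require Import ClassicalEpsilon.
Import Defs.
Set Implicit Arguments.
Unset Strict Implicit.
Unset Printing Implicit Defensive.
Import order.Order.TTheory.
Local Open Scope classical_set_scope.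

Section NkLemmas.
Variable k : nat.
Implicit Types p q m n : Nk k.

Lemma nkaddC p q : nkadd p q = nkadd q p.
Proof. by apply/ffunP => i; rewrite !ffunE addnC. Qed.
Lemma nkaddA p q m : nkadd p (nkadd q m) = nkadd (nkadd p q) m.
Proof. by apply/ffunP => i; rewrite !ffunE addnA. Qed.
Lemma nkadd0l p : nkadd nk0 p = p.
Proof. by apply/ffunP => i; rewrite !ffunE add0n. Qed.
Lemma nkadd0r p : nkadd p nk0 = p.
Proof. by apply/ffunP => i; rewrite !ffunE addn0. Qed.
Lemma nksub0 p : nksub p nk0 = p.
Proof. by apply/ffunP => i; rewrite !ffunE subn0. Qed.
Lemma nksubpp p : nksub p p = nk0.
Proof. by apply/ffunP => i; rewrite !ffunE subnn. Qed.
Lemma nkadd_subK p q : nkle p q -> nkadd p (nksub q p) = q.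
Proof. by move=> /forallP H; apply/ffunP => i; rewrite !ffunE subnKC. Qed.
Lemma nksub_addK p q : nksub (nkadd p q) p = q.
Proof. by apply/ffunP => i; rewrite !ffunE addKn. Qed.
Lemma nkadd_inj p q m : nkadd p q = nkadd p m -> q = m.
Proof. by move=> E; rewrite -(nksub_addK p q) E nksub_addK. Qed.
Lemma nkle_refl p : nkle p p.
Proof. by apply/forallP => i. Qed.
Lemma nkle0 p : nkle nk0 p.
Proof. by apply/forallP => i; rewrite ffunE. Qed.
Lemma nkle_addr p q : nkle p (nkadd p q).
Proof. by apply/forallP => i; rewrite ffunE leq_addr. Qed.
Lemma nkle_addl p q : nkle p (nkadd q p).
Proof. by rewrite nkaddC nkle_addr. Qed.
Lemma nkle_trans p q m : nkle p q -> nkle q m -> nkle p m.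
Proof. by move=> /forallP H1 /forallP H2; apply/forallP => i; apply: leq_trans (H1 i) (H2 i). Qed.
End NkLemmas.

Section KG.
Variables (k : nat) (L : kgraph k).
Implicit Types (a b l : kMor L) (p q m n : Nk k).

Lemma fact_ex l m n : kd l = nkadd m n ->
  exists a b, [/\ ks a = kr b, l = kcomp a b, kd a = m & kd b = n].
Proof.
move=> /kfactor [[a b] [[/= H1 H2 H3 H4] _]]; by exists a; exists b.
Qed.

Lemma fact_uniq a b a' b' : ks a = kr b -> ks a' = kr b' ->
  kcomp a b = kcomp a' b' -> kd a = kd a' -> a = a' /\ b = b'.
Proof.
move=> Hab Hab' E Ed.
have Ed' : kd b = kd b'.
  apply: (@nkadd_inj _ (kd a)); rewrite -kd_comp // E kd_comp // Ed //.
have := @kfactor _ L (kcomp a b) (kd a) (kd b) (kd_comp Hab).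
case=> [[x y] [_ U]].
have U1 := U (pair a b) (And4 Hab erefl erefl erefl).
have U2 := U (pair a' b') (And4 Hab' E (esym Ed) (esym Ed')).
by rewrite U1 in U2; case: U2 => -> ->.
Qed.

Lemma deg0_id b : kd b = nk0 -> b = kid (kr b).
Proof.
move=> Hb.
have H1 : ks (kid (kr b)) = kr b by rewrite ks_id.
have H2 : ks b = kr (kid (ks b)) by rewrite kr_id.
have [] := @fact_uniq (kid (kr b)) b b (kid (ks b)) H1 H2.
- by rewrite kcomp_idl kcomp_idr.
- by rewrite kd_id Hb.
by [].
Qed.

End KG.
Section IP.
Variables (k : nat) (L : kgraph k).
Implicit Types (a b l : kMor L) (p q m n : Nk k) (x y : ipath L).

Lemma ipc1 x p q : ~~ nkle p q -> x p q = x p p.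
Proof. by case: (ipP x) => H1 _ _ _ _; apply: H1. Qed.
Lemma ipc2 x p : x p p = kid (kr (x p p)).
Proof. by case: (ipP x) => _ H2 _ _ _; apply: H2. Qed.
Lemma ipc3 x p q : nkle p q -> x p p = kid (kr (x p q)) /\ x q q = kid (ks (x p q)).
Proof. by case: (ipP x) => _ _ H3 _ _; apply: H3. Qed.
Lemma ipc4 x p q : nkle p q -> kd (x p q) = nksub q p.
Proof. by case: (ipP x) => _ _ _ H4 _; apply: H4. Qed.
Lemma ipc5 x p q m : nkle p q -> nkle q m ->
  ks (x p q) = kr (x q m) /\ x p m = kcomp (x p q) (x q m).
Proof. by case: (ipP x) => _ _ _ _ H5; apply: H5. Qed.

Lemma kd_seg x q : kd (seg x q) = q.
Proof. by rewrite /seg ipc4 ?nkle0 // nksub0. Qed.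

Lemma seg_split x p q : nkle p q ->
  ks (seg x p) = kr (x p q) /\ seg x q = kcomp (seg x p) (x p q).
Proof. by move=> H; apply: ipc5 => //; apply: nkle0. Qed.

Lemma ipr_seg x q : ipr x = kr (seg x q).
Proof. by rewrite /ipr /seg (proj1 (ipc3 x (nkle0 q))) kr_id. Qed.

Lemma seg0 x : seg x nk0 = kid (ipr x).
Proof. exact: ipc2. Qed.

Lemma ipath_eq x y : (forall q, seg x q = seg y q) -> x = y.
Proof.
move=> E.
have Hxy : forall p q, x p q = y p q.
  have Hle : forall p q, nkle p q -> x p q = y p q.
    move=> p q Hpq.
    have [Cx Ex] := seg_split x Hpq; have [Cy Ey] := seg_split y Hpq.
    have := E q; rewrite Ex Ey => E'.
    by have [_ ->] := fact_uniq Cx Cy E' (etrans (kd_seg _ _) (esym (kd_seg _ _))).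
  move=> p q; case: (boolP (nkle p q)) => H; first exact: Hle.
  by rewrite !(ipc1 _ H); apply: Hle; apply: nkle_refl.
case: x y E Hxy => fx Hx [fy Hy] /= _ Hxy.
have Ef : fx = fy by apply: funext => p; apply: funext => q; apply: Hxy.
subst fy; congr IPath; exact: Prop_irrelevance.
Qed.

Lemma seg_prefix x y p q : nkle p q -> seg x q = seg y q -> seg x p = seg y p.
Proof.
move=> Hpq E.
have [Cx Ex] := seg_split x Hpq; have [Cy Ey] := seg_split y Hpq.
rewrite Ex Ey in E.
by have [-> _] := fact_uniq Cx Cy E (etrans (kd_seg _ _) (esym (kd_seg _ _))).
Qed.

Lemma ipshift_seg m x q : seg (ipshift m x) q = x m (nkadd q m).
Proof. by rewrite /seg /ipshift /= nkadd0l. Qed.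

Lemma ipr_shift m x : ipr (ipshift m x) = ks (seg x m).
Proof.
rewrite /ipr /ipshift /= nkadd0l.
by rewrite (proj2 (ipc3 x (nkle0 m))) kr_id.
Qed.

Lemma seg_add x m q :
  ks (seg x m) = kr (seg (ipshift m x) q) /\
  seg x (nkadd m q) = kcomp (seg x m) (seg (ipshift m x) q).
Proof. by rewrite ipshift_seg [nkadd q m]nkaddC; apply: seg_split; apply: nkle_addr. Qed.

Definition cat_spec l x y := seg y (kd l) = l /\ ipshift (kd l) y = x.

Lemma cat_spec_uniq l x y1 y2 : cat_spec l x y1 -> cat_spec l x y2 -> y1 = y2.
Proof.
move=> [S1 H1] [S2 H2]; apply: ipath_eq => q.
apply: (@seg_prefix _ _ q (nkadd (kd l) q)); first exact: nkle_addl.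
have [C1 E1] := seg_add y1 (kd l) q; have [C2 E2] := seg_add y2 (kd l) q.
by rewrite E1 E2 H1 H2 S1 S2.
Qed.

Lemma ipcat_ok l x : (exists y, cat_spec l x y) -> cat_spec l x (ipcat l x).
Proof. by move=> Ex; rewrite /ipcat; apply: (epsilon_spec (inhabits x) (cat_spec l x)). Qed.

End IP.
Section Mk.
Variables (k : nat) (L : kgraph k).
Implicit Types (a b l : kMor L) (p q m n : Nk k) (x y : ipath L).

Definition fac l m n : kMor L * kMor L :=
  epsilon (inhabits (pair l l)) (fun mn =>
    [/\ ks mn.1 = kr mn.2, l = kcomp mn.1 mn.2, kd mn.1 = m & kd mn.2 = n]).

Lemma fac_spec l m n : kd l = nkadd m n ->
  [/\ ks (fac l m n).1 = kr (fac l m n).2, l = kcomp (fac l m n).1 (fac l m n).2,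
      kd (fac l m n).1 = m & kd (fac l m n).2 = n].
Proof.
move=> H; rewrite /fac.
apply: (epsilon_spec (inhabits (pair l l)) (fun mn : kMor L * kMor L =>
    [/\ ks mn.1 = kr mn.2, l = kcomp mn.1 mn.2, kd mn.1 = m & kd mn.2 = n])).
have [a [b [H1 H2 H3 H4]]] := fact_ex H.
by exists (pair a b).
Qed.

Variable g : Nk k -> kMor L.
Hypothesis G1 : forall q, kd (g q) = q.
Hypothesis G2 : forall p q, nkle p q -> exists c : kMor L, ks (g p) = kr c /\ g q = kcomp (g p) c.

Definition xg p q := let q' := if nkle p q then q else p in (fac (g q') p (nksub q' p)).2.

Lemma xg_kd p q : nkle p q -> kd (xg p q) = nksub q p.
Proof.
move=> H; rewrite /xg H.
by have [] := fac_spec (etrans (G1 q) (esym (nkadd_subK H))).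
Qed.

Lemma xg_split p q : nkle p q -> ks (g p) = kr (xg p q) /\ g q = kcomp (g p) (xg p q).
Proof.
move=> H; rewrite /xg H /=.
have [C E D1 D2] := fac_spec (etrans (G1 q) (esym (nkadd_subK H))).
have [m [Cm Em]] := G2 H.
have [E1 E2] := fact_uniq C Cm (etrans (esym E) Em) (etrans D1 (esym (G1 p))).
by rewrite E2.
Qed.

Lemma xg_pp p : xg p p = kid (ks (g p)).
Proof.
have [C _] := xg_split (nkle_refl p).
by rewrite C; apply: deg0_id; rewrite xg_kd ?nkle_refl // nksubpp.
Qed.

Lemma xg_is_ipath : is_ipath xg.
Proof.
split.
- by move=> p q H; rewrite /xg (negbTE H) nkle_refl.
- by move=> p; rewrite xg_pp kr_id.
- move=> p q H; have [C E] := xg_split H.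
  by rewrite !xg_pp -C E ks_comp.
- exact: xg_kd.
- move=> p q m Hpq Hqm.
  have Hpm := nkle_trans Hpq Hqm.
  have [C1 E1] := xg_split Hpq; have [C2 E2] := xg_split Hqm; have [C3 E3] := xg_split Hpm.
  have C4 : ks (xg p q) = kr (xg q m) by rewrite -C2 E1 ks_comp.
  split; first exact: C4.
  have C5 : ks (g p) = kr (kcomp (xg p q) (xg q m)) by rewrite kr_comp.
  have E4 : kcomp (g p) (xg p m) = kcomp (g p) (kcomp (xg p q) (xg q m)).
    by rewrite -E3 E2 E1 kcompA.
  by have [_ ->] := fact_uniq C3 C5 E4 erefl.
Qed.

Definition mkip := IPath xg_is_ipath.

Lemma mkip_seg q : seg mkip q = g q.
Proof.
rewrite /seg /=.
have [C E] := xg_split (nkle0 q).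
have Hg0 := deg0_id (G1 nk0).
rewrite E Hg0; rewrite Hg0 ks_id in C.
by rewrite C kcomp_idl.
Qed.

End Mk.
Section Cat.
Variables (k : nat) (L : kgraph k).
Implicit Types (a b l : kMor L) (p q m n : Nk k) (x y : ipath L).

Lemma cat_exists l x : ipr x = ks l -> exists y, cat_spec l x y.
Proof.
move=> Hr.
have C q : ks l = kr (seg x q) by rewrite -Hr (ipr_seg x q).
pose Lq q := kcomp l (seg x q).
have KL q : kd (Lq q) = nkadd q (kd l) by rewrite /Lq kd_comp // kd_seg nkaddC.
pose g q := (fac (Lq q) q (kd l)).1.
pose r q := (fac (Lq q) q (kd l)).2.
have S q : [/\ ks (g q) = kr (r q), Lq q = kcomp (g q) (r q), kd (g q) = q & kd (r q) = kd l].
  exact: fac_spec (KL q).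
have G1 q : kd (g q) = q by case: (S q).
have G2 p q : nkle p q -> exists c : kMor L, ks (g p) = kr c /\ g q = kcomp (g p) c.
  move=> Hpq.
  have [a [c [Cac Eac Da Dc]]] := @fact_ex _ _ (g q) p (nksub q p) (etrans (G1 q) (esym (nkadd_subK Hpq))).
  have [Cq Eq _ Drq] := S q; have [Cp Ep _ Drp] := S p.
  have [Cx Ex] := seg_split x Hpq.
  have Cc : ks c = kr (r q) by rewrite -Cq Eac ks_comp.
  have E1 : Lq q = kcomp a (kcomp c (r q)).
    by rewrite Eq Eac kcompA.
  have Crp : ks (r p) = kr (x p q).
    by rewrite -Cx -(ks_comp Cp) -Ep /Lq ks_comp.
  have E2 : Lq q = kcomp (g p) (kcomp (r p) (x p q)).
    rewrite /Lq Ex kcompA ?C //.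
    by rewrite -/(Lq p) Ep -kcompA.
  have Ca' : ks a = kr (kcomp c (r q)) by rewrite kr_comp.
  have Cg' : ks (g p) = kr (kcomp (r p) (x p q)) by rewrite kr_comp.
  have [Ea _] := fact_uniq Ca' Cg' (etrans (esym E1) E2) (etrans Da (esym (G1 p))).
  by exists c; rewrite -Ea.
exists (mkip G1 G2).
have Hl : g (kd l) = l.
  have [Cd Ed _ Drd] := S (kd l).
  have := seg_split x (nkle0 (kd l)).
  have [E _] := fact_uniq Cd (C (kd l)) (esym Ed) (G1 _).
  by [].
split; first by rewrite mkip_seg.
apply: ipath_eq => q.
have [Cy Ey] := seg_add (mkip G1 G2) (kd l) q.
rewrite !mkip_seg Hl in Ey; rewrite mkip_seg Hl in Cy.
have Hq : g (nkadd (kd l) q) = kcomp l (seg x q).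
  have [Cd Ed Dd _] := S (nkadd (kd l) q).
  have [Cx Ex] := seg_split x (nkle_addl q (kd l)).
  have Cl : ks (kcomp l (seg x q)) = kr (x q (nkadd (kd l) q)) by rewrite ks_comp.
  have E : kcomp (g (nkadd (kd l) q)) (r (nkadd (kd l) q)) =
           kcomp (kcomp l (seg x q)) (x q (nkadd (kd l) q)).
    by rewrite -Ed /Lq Ex kcompA.
  have Dq : kd (g (nkadd (kd l) q)) = kd (kcomp l (seg x q)) by rewrite Dd kd_comp // kd_seg.
  by have [E1 _] := fact_uniq Cd Cl E Dq.
have [_ E2] := fact_uniq Cy (C q) (etrans (esym Ey) Hq) erefl.
exact: E2.
Qed.

Lemma ipcat_spec l x : ipr x = ks l -> cat_spec l x (ipcat l x).
Proof. by move=> H; apply: ipcat_ok; apply: cat_exists. Qed.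

End Cat.
Section Borel.
Variables (k : nat) (L : kgraph k).
Implicit Types (l : kMor L) (x y w : ipath L).

Lemma borel_sa : sigma_algebra setT (@ipborel k L).
Proof. exact: smallest_sigma_algebra. Qed.

Lemma cyl_borel l : @ipborel k L (cyl l).
Proof. by apply: sub_sigma_algebra; exists l. Qed.

Lemma borelC A : @ipborel k L A -> @ipborel k L (~` A).
Proof. by case: borel_sa => _ H _ /H; rewrite setTD. Qed.

Lemma borel_bigcap (A : nat -> set (ipath L)) :
  (forall n, @ipborel k L (A n)) -> @ipborel k L (\bigcap_n A n).
Proof.
move=> HA.
have -> : \bigcap_n A n = ~` \bigcup_n ~` A n.
  apply/seteqP; split => x /=.
  - by move=> Hx [n _ /= Hn]; apply: Hn; apply: Hx.
  - move=> Hx n _; apply: contrapT => Hn; apply: Hx; by exists n.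
apply: borelC; case: borel_sa => _ _; apply => n; exact: borelC.
Qed.

Lemma single_borel w : @ipborel k L [set w].
Proof.
pose A (j : nat) := if (unpickle j : option (Nk k)) is Some q then cyl (seg w q) else setT.
have -> : [set w] = \bigcap_j A j.
  apply/seteqP; split => x /=.
  - move=> -> j _; rewrite /A; case: (unpickle j) => [q|] //=.
    by rewrite /cyl /= kd_seg.
  - move=> Hx; apply: ipath_eq => q.
    have := Hx (pickle q) I; rewrite /A pickleK /cyl /= kd_seg //.
apply: borel_bigcap => j; rewrite /A; case: (unpickle j) => [q|].
- exact: cyl_borel.
- by case: borel_sa => H0 HC _; rewrite -setC0; apply: borelC.
Qed.

End Borel.
Section Hil.
Variables (R : realType) (H : lmodType R[i]) (ip : H -> H -> R[i]).
Hypothesis hH : is_hilbert ip.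
Local Open Scope ring_scope.

Lemma ipL a u v w : ip (a *: u + v) w = a * ip u w + ip v w.
Proof. by case: hH => H1 _ _ _ _; apply: H1. Qed.
Lemma ipC u v : ip u v = conjc (ip v u).
Proof. by case: hH => _ H2 _ _ _; apply: H2. Qed.
Lemma ip_ge0 v : 0 <= ip v v.
Proof. by case: hH => _ _ H3 _ _; apply: H3. Qed.
Lemma ip_eq0 v : ip v v = 0 -> v = 0.
Proof. by case: hH => _ _ _ H4 _; apply: H4. Qed.

Lemma ip0l w : ip 0 w = 0.
Proof.
have := ipL (-1) 0 0 w; rewrite scaler0 addr0 mulN1r => E.
by rewrite E addNr.
Qed.

Lemma ip0r u : ip u 0 = 0.
Proof. by rewrite ipC ip0l conjc0. Qed.

Lemma ipB u v w : ip (u - v) w = ip u w - ip v w.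
Proof.
have := ipL (-1) v u w; rewrite scaleN1r mulN1r addrC => ->.
by rewrite addrC.
Qed.

Lemma ipBr u v w : ip u (v - w) = ip u v - ip u w.
Proof. by rewrite ipC ipB rmorphB /= -!ipC. Qed.

Lemma small_zero v : (forall e : R, 0 < e -> nsq ip v < e) -> v = 0.
Proof.
move=> He; apply: ip_eq0.
have := ip_ge0 v; rewrite lecE /= => /andP [/eqP HI HR].
have HR' : complex.Re (ip v v) <= 0.
  rewrite leNgt; apply/negP => Hp.
  by have := He _ Hp; rewrite /nsq ltxx.
have HR0 : complex.Re (ip v v) = 0 by apply/eqP; rewrite eq_le HR' HR.
move: HI HR0; case: (ip v v) => a b /= -> ->; done.
Qed.

Lemma adj_sym T S : adjoint_of ip T S -> adjoint_of ip S T.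
Proof. by move=> HA u v; rewrite ipC -HA -ipC. Qed.

Lemma adj_uniq T S1 S2 : adjoint_of ip T S1 -> adjoint_of ip T S2 -> S1 = S2.
Proof.
move=> A1 A2; apply: funext => v; apply/eqP; rewrite -subr_eq0; apply/eqP.
apply: ip_eq0.
by rewrite ipBr -A1 -A2 subrr.
Qed.

Lemma adj_comp A A' B B' : adjoint_of ip A A' -> adjoint_of ip B B' ->
  adjoint_of ip (A \o B) (B' \o A').
Proof. by move=> HA HB u v /=; rewrite HA HB. Qed.

Lemma adj_zero T S : adjoint_of ip T S -> S 0 = 0.
Proof. by move=> /adj_sym HA; apply: ip_eq0; rewrite HA ip0l. Qed.

End Hil.
Lemma inj_cover (T : Type) (Q : T -> Prop) n0 (f0 : 'I_n0 -> T) :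
  (forall i, Q (f0 i)) -> exists n (f : 'I_n -> T),
  [/\ injective f, forall i, Q (f i), forall i0, exists i, f i = f0 i0 &
      forall i, exists i0, f i = f0 i0].
Proof.
elim: n0 f0 => [|n0 IH] f0 HQ.
  exists 0%N, f0; split => //; by case.
have [n [f [Fi FQ Fc Fb]]] := IH (fun j => f0 (lift ord_max j)) (fun j => HQ _).
pose z := f0 ord_max.
case: (pselect (exists i, f i = z)) => [[iz Hiz]|Hn].
  exists n, f; split => //.
  - move=> i0; case: (unliftP ord_max i0) => [j ->|->]; first exact: Fc.
    by exists iz.
  - move=> i; have [j Hj] := Fb i; by exists (lift ord_max j).
pose g (i : 'I_n.+1) := if unlift ord_max i is Some j then f j else z.
exists n.+1, g; split.
- move=> i1 i2; rewrite /g.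
  case: (unliftP ord_max i1) => [j1 ->|->]; case: (unliftP ord_max i2) => [j2 ->|->] //.
  + by move=> /Fi ->.
  + by move=> E; exfalso; apply: Hn; exists j1.
  + by move=> E; exfalso; apply: Hn; exists j2.
- move=> i; rewrite /g; case: (unlift ord_max i) => [j|] //; exact: HQ.
- move=> i0; case: (unliftP ord_max i0) => [j ->|->].
  + have [i Hi] := Fc j; exists (lift ord_max i); by rewrite /g liftK.
  + by exists ord_max; rewrite /g unlift_none.
- move=> i; rewrite /g; case: (unlift ord_max i) => [j|].
  + have [i0 Hi0] := Fb j; by exists (lift ord_max i0).
  + by exists ord_max.
Qed.
Local Open Scope ring_scope.

Section Main.
Variables (k : nat) (L : kgraph k)
  (R : realType) (H : lmodType R[i]) (ip : H -> H -> R[i])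
  (t ts : kMor L -> H -> H) (P : set (ipath L) -> H -> H).
Implicit Types (l m e : kMor L) (x w z y : ipath L) (h : H).
Hypothesis hH : is_hilbert ip.
Hypothesis hrep : is_representation ip t ts.
Hypothesis hpvm : pvm_of_rep ip t ts P.
Variable Om : set (ipath L).
Hypothesis OmB : ipborel Om.
Hypothesis POm : P (~` Om) = (fun=> 0).
Hypothesis Happ : forall h (e : R), 0 < e ->
           exists n0 (f0 : 'I_n0 -> ipath L), (forall i, Om (f0 i)) /\
           forall n (f : 'I_n -> ipath L), injective f -> (forall i, Om (f i)) ->
             (forall i0, exists i, f i = f0 i0) ->
             nsq ip (\sum_(i < n) P [set f i] h - h) < e.

Lemma adjt l : adjoint_of ip (t l) (ts l).
Proof. by case: hrep => H1 _ _ _ _; case: (H1 l). Qed.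
Lemma adjts l : adjoint_of ip (ts l) (t l).
Proof. exact: (adj_sym hH (adjt l)). Qed.
Lemma CK2 l m : ks l = kr m -> t l \o t m = t (kcomp l m).
Proof. by case: hrep => _ _ X _ _; apply: X. Qed.
Lemma CK3 l : ts l \o t l = t (kid (ks l)).
Proof. by case: hrep => _ _ _ X _; apply: X. Qed.
Lemma tid_proj v : is_proj ip (t (kid v)).
Proof. by case: hrep => _ [X _] _ _ _; apply: X. Qed.
Lemma PB A : ipborel A -> is_proj ip (P A).
Proof. by case: hpvm => [[H1 _ _ _ _] _]; apply: H1. Qed.
Lemma P0 : P set0 = (fun=> 0).
Proof. by case: hpvm => [[_ H1 _ _ _] _]. Qed.
Lemma PI A B : ipborel A -> ipborel B -> P (A `&` B) = P A \o P B.
Proof. by case: hpvm => [[_ _ _ H1 _] _]; apply: H1. Qed.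
Lemma Pcyl l : P (cyl l) = t l \o ts l.
Proof. by case: hpvm => [_ H1]. Qed.

Lemma tsC l m : ks l = kr m -> ts (kcomp l m) = ts m \o ts l.
Proof.
move=> C; apply: (adj_uniq hH (adjt _)).
rewrite -CK2 //; exact: adj_comp (adjt l) (adjt m).
Qed.

Lemma tsid v : ts (kid v) = t (kid v).
Proof. by apply: (adj_uniq hH (adjt _)); case: (tid_proj v) => _ []. Qed.

Lemma Pcylid v : P (cyl (kid v)) = t (kid v).
Proof. by rewrite Pcyl tsid; case: (tid_proj v) => _ []. Qed.

Lemma PA_adj A : ipborel A -> adjoint_of ip (P A) (P A).
Proof. by move=> /PB [_ []]. Qed.

Lemma Pzero A : ipborel A -> P A 0 = 0.
Proof. by move=> /PA_adj /adj_zero; apply. Qed.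

Lemma t0 l : t l 0 = 0.
Proof. exact: adj_zero (adjts l). Qed.
Lemma ts0 l : ts l 0 = 0.
Proof. exact: adj_zero (adjt l). Qed.

Lemma Psubl A B : ipborel A -> ipborel B -> A `<=` B -> forall h, P A h = P B (P A h).
Proof.
move=> HA HB S h; have := PI HB HA; rewrite setIidr // => E.
by rewrite {1}E.
Qed.
Lemma Psubr A B : ipborel A -> ipborel B -> A `<=` B -> forall h, P A h = P A (P B h).
Proof.
move=> HA HB S h; have := PI HA HB; rewrite setIidl // => E.
by rewrite {1}E.
Qed.
Lemma Pdisj A B : ipborel A -> ipborel B -> A `&` B = set0 -> forall h, P A (P B h) = 0.
Proof. by move=> HA HB E h; have := PI HA HB; rewrite E P0 => E'; rewrite -[LHS]/((P A \o P B) h) -E'. Qed.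


Lemma Pw_out w : ~ Om w -> forall h, P [set w] h = 0.
Proof.
move=> Hw h.
have S : [set w] `<=` ~` Om by move=> x ->.
rewrite (Psubr (single_borel w) (borelC OmB) S) POm.
exact: Pzero (single_borel w).
Qed.

Lemma atomic (A : H -> H) w :
  (forall z, Om z -> z <> w -> forall h, P [set z] (A h) = 0) ->
  forall h, A h = P [set w] (A h).
Proof.
move=> HA h; set g := A h.
apply/eqP; rewrite eq_sym -subr_eq0; apply/eqP; apply: (small_zero hH) => e He.
have [n0 [f0 [Hf0 Hap]]] := Happ g He.
suff [n [f [Fi FO Fc Fs]]] : exists n (f : 'I_n -> ipath L),
   [/\ injective f, forall i, Om (f i), forall i0, exists i, f i = f0 i0 &
       \sum_(i < n) P [set f i] g = P [set w] g].
  by rewrite -Fs; apply: Hap.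
case: (pselect (Om w)) => Hw.
- pose f0' (i : 'I_n0.+1) := if unlift ord_max i is Some j then f0 j else w.
  have HQ : forall i, Om (f0' i) by move=> i; rewrite /f0'; case: (unlift ord_max i).
  have [n [f [Fi FO Fc Fb]]] := inj_cover HQ.
  exists n, f; split => //.
  + move=> i0; have [i Hi] := Fc (lift ord_max i0); exists i; by rewrite Hi /f0' liftK.
  + have [iw Hiw] := Fc ord_max; rewrite /f0' unlift_none in Hiw.
    rewrite (bigD1 iw) //= Hiw big1 ?addr0 // => i Hi.
    apply: HA => //; move=> E; move/negP: Hi; apply; apply/eqP; apply: Fi; by rewrite E Hiw.
- have [n [f [Fi FO Fc Fb]]] := inj_cover Hf0.
  exists n, f; split => //.
  rewrite Pw_out // big1 // => i _; apply: HA => // E; apply: Hw; rewrite -E; exact: FO.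
Qed.


Lemma CK2p l m h : ks l = kr m -> t l (t m h) = t (kcomp l m) h.
Proof. by move=> C; rewrite -(CK2 C). Qed.
Lemma CK3p l h : ts l (t l h) = t (kid (ks l)) h.
Proof. by rewrite -CK3. Qed.
Lemma Pcylp l h : P (cyl l) h = t l (ts l h).
Proof. by rewrite Pcyl. Qed.
Lemma tsCp l m h : ks l = kr m -> ts (kcomp l m) h = ts m (ts l h).
Proof. by move=> C; rewrite (tsC C). Qed.
Lemma Pcylidp v h : P (cyl (kid v)) h = t (kid v) h.
Proof. by rewrite Pcylid. Qed.

Lemma t_ts_t e h : t e h = t e (ts e (t e h)).
Proof.
rewrite CK3p CK2p ?kr_id // kcomp_idr //.
Qed.

Lemma in_cyl_seg x (q : Nk k) : cyl (seg x q) x.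
Proof. by rewrite /cyl /= kd_seg. Qed.

Lemma in_cyl_id x : cyl (kid (ipr x)) x.
Proof. rewrite /cyl /= kd_id; exact: seg0. Qed.

Lemma single_cyl w l : cyl l w -> [set w] `<=` cyl l.
Proof. by move=> Hw x ->. Qed.

Lemma cyl_disj l m : kd l = kd m -> l <> m -> cyl l `&` cyl m = set0.
Proof.
move=> D N; apply/seteqP; split => x //= [H1 H2]; apply: N.
by rewrite /cyl /= in H1 H2; rewrite -H1 -H2 D.
Qed.

Lemma cyl_single_disj l z : ~ cyl l z -> cyl l `&` [set z] = set0.
Proof. by move=> N; apply/seteqP; split => x //= [H1 H2]; apply: N; rewrite -H2. Qed.
Lemma single_cyl_disj l z : ~ cyl l z -> [set z] `&` cyl l = set0.
Proof. by move=> N; rewrite setIC; apply: cyl_single_disj. Qed.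

Lemma partb (n : Nk k) e w : kd e = n -> e <> seg w n -> forall h, ts e (P [set w] (t e h)) = 0.
Proof.
move=> D N h.
have Dj : cyl (seg w n) `&` cyl e = set0.
  by apply: cyl_disj; rewrite ?kd_seg // => E; apply: N.
rewrite (Psubr (single_borel w) (cyl_borel (seg w n)) (single_cyl (in_cyl_seg w n))).
rewrite t_ts_t -Pcylp (Pdisj (cyl_borel _) (cyl_borel _) Dj).
by rewrite Pzero ?ts0 //; exact: single_borel.
Qed.


Lemma parta1 l w : ipr w = ks l -> t l \o P [set w] \o ts l = P [set ipcat l w].
Proof.
move=> Hr.
have [Sy1 Sy2] := ipcat_spec Hr.
set y := ipcat l w in Sy1 Sy2 *.
have Cw (q : Nk k) : ks l = kr (seg w q) by rewrite -Hr (ipr_seg w q).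
have Fy (q : Nk k) : seg y (nkadd (kd l) q) = kcomp l (seg w q).
  by have [_ E] := seg_add y (kd l) q; rewrite E Sy1 Sy2.
have Pcy (q : Nk k) h : P (cyl (seg y (nkadd (kd l) q))) h = t l (P (cyl (seg w q)) (ts l h)).
  by rewrite Fy !Pcylp tsCp ?Cw // CK2p ?Cw.
have Bw := single_borel w; have By := single_borel y.
have Sw : [set w] `<=` cyl (kid (ks l)).
  by apply: single_cyl; rewrite -Hr; apply: in_cyl_id.
have Pwid h : P [set w] h = t (kid (ks l)) (P [set w] h).
  by rewrite -Pcylidp; apply: Psubl => //; exact: cyl_borel.
pose Q h := t l (P [set w] (ts l h)).
have QA : forall h, Q h = P [set y] (Q h).
  apply: atomic => z Oz Nz h.
  have [q Nq] : exists q, seg z q <> seg y q.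
    apply: contrapT => Hn; apply: Nz; apply: ipath_eq => q; apply: contrapT => Hq.
    by apply: Hn; exists q.
  have Nq' : seg z (nkadd (kd l) q) <> seg y (nkadd (kd l) q).
    by move=> E; apply: Nq; apply: seg_prefix E; apply: nkle_addl.
  have E1 : Q h = P (cyl (seg y (nkadd (kd l) q))) (Q h).
    rewrite Pcy /Q CK3p -Pwid.
    by rewrite -(Psubl Bw (cyl_borel _) (single_cyl (in_cyl_seg w q))).
  rewrite E1 (Pdisj (single_borel z) (cyl_borel _)) //.
  by apply: single_cyl_disj; rewrite /cyl /= kd_seg.
pose Rm h := ts l (P [set y] (t l h)).
have RC : forall h, Rm h = P [set w] (Rm h).
  apply: atomic => z Oz Nz h.
  have [q Nq] : exists q, seg z q <> seg w q.
    apply: contrapT => Hn; apply: Nz; apply: ipath_eq => q; apply: contrapT => Hq.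
    by apply: Hn; exists q.
  have S : cyl (seg w q) `<=` cyl (kid (ks l)).
    move=> x; rewrite /cyl /= kd_id seg0 kd_seg => Ex.
    by rewrite (ipr_seg x q) Ex -Cw.
  have E1 : Rm h = P (cyl (seg w q)) (Rm h).
    rewrite /Rm {1}(Psubl By (cyl_borel _) (single_cyl (in_cyl_seg y (nkadd (kd l) q)))).
    rewrite Pcy CK3p -Pcylidp.
    by rewrite -(Psubl (cyl_borel _) (cyl_borel _) S).
  rewrite E1 (Pdisj (single_borel z) (cyl_borel _)) //.
  by apply: single_cyl_disj; rewrite /cyl /= kd_seg.
have Yl : cyl l y by rewrite /cyl /= Sy1.
have PyE h : P [set y] h = Q (P [set y] h).
  have E2 : P [set y] h = t l (Rm (ts l h)).
    rewrite /Rm -!Pcylp.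
    by rewrite -(Psubr By (cyl_borel l) (single_cyl Yl)) -(Psubl By (cyl_borel l) (single_cyl Yl)).
  rewrite {1}E2 RC /Rm -Pcylp.
  by rewrite -(Psubr By (cyl_borel l) (single_cyl Yl)).
have AQ : adjoint_of ip Q Q.
  exact: adj_comp (adj_comp (adjt l) (PA_adj Bw)) (adjts l).
have E3 : P [set y] = P [set y] \o Q.
  apply: (adj_uniq hH (PA_adj By)).
  have E4 : P [set y] = Q \o P [set y] by apply: funext => h; exact: PyE.
  rewrite {1}E4; exact: adj_comp AQ (PA_adj By).
apply/boolp.funext => h /=.
by rewrite E3 /= -QA.
Qed.

Lemma parta2 w (n : Nk k) : ts (seg w n) \o P [set w] \o t (seg w n) = P [set ipshift n w].
Proof.
set mu := seg w n; set w' := ipshift n w.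
have Hr : ipr w' = ks mu := ipr_shift n w.
have E := parta1 Hr.
have Ec : ipcat mu w' = w.
  apply: (cat_spec_uniq (ipcat_spec Hr)); split; rewrite /mu kd_seg //.
rewrite Ec in E.
have S : [set w'] `<=` cyl (kid (ks mu)).
  by apply: single_cyl; rewrite -Hr; apply: in_cyl_id.
have Bw' := single_borel w'.
apply/boolp.funext => h /=.
rewrite -E /= !CK3p -!Pcylidp.
by rewrite -(Psubl Bw' (cyl_borel _) S) -(Psubr Bw' (cyl_borel _) S).
Qed.

End Main.
Theorem proposition3p3 (k : nat) (L : kgraph k)
  (R : realType) (H : lmodType R[i]) (ip : H -> H -> R[i])
  (t ts : kMor L -> H -> H) (P : set (ipath L) -> H -> H) :
  is_hilbert ip ->
  row_finite L -> no_sources L ->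
  is_representation ip t ts ->
  pvm_of_rep ip t ts P ->
  purely_atomic ip P ->
  ((forall (l : kMor L) (w : ipath L), ipr w = ks l ->
      t l \o P [set w] \o ts l = P [set ipcat l w]) /\
   (forall (w : ipath L) (n : Nk k),
      ts (seg w n) \o P [set w] \o t (seg w n) = P [set ipshift n w])) /\
  (forall (n : Nk k) (e : kMor L) (w : ipath L), kd e = n -> e <> seg w n ->
      ts e \o P [set w] \o t e = (fun=> 0)).
Proof.
move=> hH _ _ hrep hpvm [Om [OmB POm _ Happ]].
split; first split.
- by move=> l w Hr; apply: (parta1 hH hrep hpvm OmB POm Happ).
- by move=> w n; apply: (parta2 hH hrep hpvm OmB POm Happ).
- move=> n e w D N; apply/boolp.funext => h /=.
  exact: (partb hH hrep hpvm D N).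
Qed.
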